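(* A system $C=(1,c_2,c_3,c_4,2c_4-c_2)$ is canonical and its subsystem $(1,c_2,c_3,c_4)$ is noncanonical if and only if $C=(1,2,c_3,c_3+1,2c_3)$ and $c_3>3$.
   Context: A system is a tuple $C=(c_1,\dots,c_n)$ of integers with $1=c_1<c_2<\dots<c_n$; for $k\le n$, $(c_1,\dots,c_k)$ is a subsystem. For a positive integer $v$, $\mathrm{opt}_C(v)$ is the minimum of $\sum_i x_i$ over $x\in\mathbb{Z}_{\ge0}^n$ with $\sum_i c_ix_i=v$. The greedy representation of $v$ is produced by: for $i=n$ down to $1$, while $c_i\le$ remaining value, take a coin $c_i$. $\mathrm{grd}_C(v)$ is its number of coins. A positive integer $w$ is a counterexample if $\mathrm{opt}_C(w)<\mathrm{grd}_C(w)$; $C$ is canonical if it has none, noncanonical otherwise. *)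

(* Defs.v *)
From mathcomp Require Import all_boot.
Set Implicit Arguments. Unset Strict Implicit. Unset Printing Implicit Defensive.

Definition is_system (C : seq nat) : Prop :=
  head 0 C = 1 /\ sorted ltn C.

Definition is_rep (C : seq nat) (x : seq nat) (v : nat) : Prop :=
  size x = size C /\ \sum_(i < size C) nth 0 C i * nth 0 x i = v.

Fixpoint grd_aux (Crev : seq nat) (v : nat) : nat :=
  match Crev with
  | [::] => 0
  | c :: cs => if c == 0 then grd_aux cs v else v %/ c + grd_aux cs (v %% c)
  end.
Definition grd (C : seq nat) (v : nat) : nat := grd_aux (rev C) v.

(* opt_C(w) < grd_C(w), with opt the minimum of sum x over representations:
   equivalently some representation uses fewer coins than greedy. *)
Definition counterexample (C : seq nat) (w : nat) : Prop :=
  0 < w /\ exists x, is_rep C x w /\ sumn x < grd C w.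

Definition canonical (C : seq nat) : Prop := forall w, ~ counterexample C w.

(* Main.v *)
Require Import Defs.
From mathcomp Require Import all_boot zify.
From Stdlib Require Import Classical.
Lemma t (v d b a : nat) : 0 < a -> 0<b -> 0<d -> v = v %% d %% b %% a + a * (v %% d %% b %/ a) + b * (v %% d %/ b) + d * (v %/ d).
Proof. move=> ha hb hd.
have E1 := divn_eq v d. have E2 := divn_eq (v %% d) b. have E3 := divn_eq (v%%d%%b) a.
lia. Qed.

Lemma divmodE v q r c : r < c -> v = q*c + r -> v %/ c = q /\ v %% c = r.
Proof.
move=> hr ->; have hc : 0 < c by lia.
rewrite divnMDl // modnMDl divn_small // modn_small //; split; lia.
Qed.

Arguments divmodE {v q r c}.
Lemma grdS a b d v : 0<a -> 0<b -> 0<d ->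
  grd [:: 1;a;b;d] v = v %/ d + v %% d %/ b + v %% d %% b %/ a + v %% d %% b %% a.
Proof.
move=> ha hb hd; rewrite /grd /= (negbTE (lt0n_neq0 ha)) (negbTE (lt0n_neq0 hb))
  (negbTE (lt0n_neq0 hd)) divn1 !addn0 !addnA //.
Qed.

Lemma grdC a b d e v : 0<a -> 0<b -> 0<d -> 0<e ->
  grd [:: 1;a;b;d;e] v = v %/ e + grd [::1;a;b;d] (v %% e).
Proof.
move=> ha hb hd he; rewrite /grd /= (negbTE (lt0n_neq0 ha)) (negbTE (lt0n_neq0 hb))
  (negbTE (lt0n_neq0 hd)) (negbTE (lt0n_neq0 he)) //.
Qed.

Lemma rep4P a b d x v : is_rep [:: 1;a;b;d] x v ->
  exists x1 x2 x3 x4, x = [:: x1;x2;x3;x4] /\ v = x1 + a*x2 + b*x3 + d*x4.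
Proof.
case=> hs <-; case: x hs => [|x1 [|x2 [|x3 [|x4 [|x5 x]]]]] //= _.
exists x1, x2, x3, x4; split => //.
rewrite !big_ord_recl big_ord0 /=. lia.
Qed.

Lemma rep4 a b d x1 x2 x3 x4 : is_rep [:: 1;a;b;d] [:: x1;x2;x3;x4] (x1 + a*x2 + b*x3 + d*x4).
Proof. split => //; rewrite !big_ord_recl big_ord0 /=; lia. Qed.

Lemma rep5 a b d e x1 x2 x3 x4 x5 : is_rep [:: 1;a;b;d;e] [:: x1;x2;x3;x4;x5] (x1 + a*x2 + b*x3 + d*x4 + e*x5).
Proof. split => //; rewrite !big_ord_recl big_ord0 /=; lia. Qed.

Lemma rep5P a b d e x v : is_rep [:: 1;a;b;d;e] x v ->
  exists x1 x2 x3 x4 x5, x = [:: x1;x2;x3;x4;x5] /\ v = x1 + a*x2 + b*x3 + d*x4 + e*x5.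
Proof.
case=> hs <-; case: x hs => [|x1 [|x2 [|x3 [|x4 [|x5 [|x6 x]]]]]] //= _.
exists x1, x2, x3, x4, x5; split => //.
rewrite !big_ord_recl big_ord0 /=. lia.
Qed.

Definition g c r := if r < c then r %/ 2 + r %% 2 else if r == c then 1
  else (r - c - 1) %/ 2 + (r - c - 1) %% 2 + 1.

Lemma grdF c q r : 3 < c -> r < 2*c -> grd [::1;2;c;c+1;2*c] (q*(2*c) + r) = q + g c r.
Proof.
move=> hc hr; rewrite grdC; try lia.
have [-> ->] := divmodE hr (erefl (q*(2*c)+r)).
rewrite grdS; try lia. congr (_ + _). rewrite /g.
case: (ltnP r c) => h1.
  rewrite (@divn_small r (c+1)) ?(@modn_small r (c+1)) ?(@divn_small r c) ?(@modn_small r c); lia.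
case: eqP => h2.
  subst r. rewrite (@divn_small c (c+1)) ?(@modn_small c (c+1)) ?divnn ?modnn; try lia. 
have h3 : r - c - 1 < c+1 by lia.
have h4 : r = 1 * (c+1) + (r - c - 1) by lia.
have [-> ->] := divmodE h3 h4.
rewrite (@divn_small (r-c-1) c) ?(@modn_small (r-c-1) c); lia.
Qed.

Lemma mem5 (k a b c d e : nat) : k \in [:: a;b;c;d;e] -> k = a \/ k = b \/ k = c \/ k = d \/ k = e.
Proof.
rewrite !inE => /orP[/eqP|/orP[/eqP|/orP[/eqP|/orP[/eqP|/eqP]]]]-> ; tauto.
Qed.

Lemma incr c v k : 3 < c -> k \in [:: 1;2;c;c+1;2*c] ->
  grd [::1;2;c;c+1;2*c] (v + k) <= grd [::1;2;c;c+1;2*c] v + 1.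
Proof.
move=> hc hk.
have hv := divn_eq v (2*c). have hr : v %% (2*c) < 2*c by rewrite ltn_pmod; lia.
move: hv hr; set q := v %/ (2*c); set r := v %% (2*c) => hv hr.
have hk2 : 0 < k <= 2*c by case/mem5: hk => [->|[->|[->|[->|->]]]]; lia.
rewrite hv grdF //.
case: (ltnP (r + k) (2*c)) => hrk.
  rewrite -addnA grdF //.
  rewrite /g; case/mem5: hk => [|[|[|[|]]]] hk'; subst k; repeat case: ifP; repeat case: eqP; lia.
rewrite (_ : q * (2 * c) + r + k = q.+1 * (2*c) + (r + k - 2*c)); last by lia.
rewrite grdF; last lia; last done.
rewrite /g; case/mem5: hk => [|[|[|[|]]]] hk'; subst k; repeat case: ifP; repeat case: eqP; lia.
Qed.

Lemma iterincr (c n v k : nat) : 3 < c -> k \in [:: 1;2;c;c+1;2*c] ->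
  grd [::1;2;c;c+1;2*c] (v + n * k) <= grd [::1;2;c;c+1;2*c] v + n.
Proof.
move=> hc hk; elim: n => [|n IH]; first by rewrite mul0n addn0 addn0.
have -> : v + n.+1 * k = v + n * k + k by lia.
have := incr c (v + n * k) k hc hk. lia.
Qed.

Lemma canonF c : 3 < c -> canonical [::1;2;c;c+1;2*c].
Proof.
move=> hc w [hw [x [hrep hlt]]].
case/rep5P: hrep => x1 [x2 [x3 [x4 [x5 [hx hv]]]]]; subst x; move: hlt => /=.
have h0 : grd [::1;2;c;c+1;2*c] 0 = 0.
  have := grdF c 0 0 hc (_ : 0 < 2*c); rewrite mul0n addn0 /g => ->; last lia.
  by rewrite ifT //; lia.
have mem_1 : 1 \in [:: 1;2;c;c+1;2*c] by rewrite !inE eqxx.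
have mem_2 : 2 \in [:: 1;2;c;c+1;2*c] by rewrite !inE eqxx ?orbT.
have mem_c : c \in [:: 1;2;c;c+1;2*c] by rewrite !inE eqxx ?orbT.
have mem_c1 : c+1 \in [:: 1;2;c;c+1;2*c] by rewrite !inE eqxx ?orbT.
have mem_2c : 2*c \in [:: 1;2;c;c+1;2*c] by rewrite !inE eqxx ?orbT.
have h1 := iterincr c x1 (0) (1) hc (mem_1).
have h2 := iterincr c x2 ((0 + x1*1)) (2) hc (mem_2).
have h3 := iterincr c x3 ((0 + x1*1 + x2*2)) (c) hc (mem_c).
have h4 := iterincr c x4 ((0 + x1*1 + x2*2 + x3*c)) (c+1) hc (mem_c1).
have h5 := iterincr c x5 ((0 + x1*1 + x2*2 + x3*c + x4*(c+1))) (2*c) hc (mem_2c).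
have -> : w = 0 + x1*1 + x2*2 + x3*c + x4*(c+1) + x5*(2*c) by lia.
lia.
Qed.

Lemma noncanonF c : 3 < c -> ~ canonical [::1;2;c;c+1].
Proof.
move=> hc H; apply: (H (2*c)); split; first lia.
exists [:: 0;0;2;0]; split.
  have := rep4 2 c (c+1) 0 0 2 0; congr is_rep; lia.
rewrite grdS /=; try lia.
have h3 : c - 1 < c+1 by lia.
have h4 : 2*c = 1 * (c+1) + (c - 1) by lia.
have [-> ->] := divmodE h3 h4.
rewrite (@divn_small (c-1) c) ?(@modn_small (c-1) c); lia.
Qed.

Lemma minP (P : nat -> Prop) n : P n -> exists m, P m /\ forall k, k < m -> ~ P k.
Proof.
elim/ltn_ind: n => n IH Pn.
case: (classic (exists k, k < n /\ P k)) => [[k [hk Pk]]|H]; first exact: IH k hk Pk.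
exists n; split => // k hk Pk; apply: H; by exists k.
Qed.

Section S.
Variables a b d : nat.
Hypotheses (ha : 1 < a) (hab : a < b) (hbd : b < d).
Let e := 2*d - a.
Let pa : 0 < a. Proof. lia. Qed.
Let pb : 0 < b. Proof. lia. Qed.
Let pd : 0 < d. Proof. lia. Qed.
Let pe : 0 < 2*d-a. Proof. lia. Qed.
Let S := [:: 1; a; b; d].
Let C := [:: 1; a; b; d; 2*d - a].

Lemma grdS_rep v : exists x1 x2 x3 x4, v = x1 + a*x2 + b*x3 + d*x4 /\ grd S v = x1+x2+x3+x4.
Proof.
rewrite /S grdS //.
exists (v %% d %% b %% a), (v %% d %% b %/ a), (v %% d %/ b), (v %/ d); split; last lia.
by apply: t.
Qed.

Lemma grdS_sub v : d <= v -> grd S v = 1 + grd S (v - d).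
Proof.
move=> hv; rewrite /S !grdS //.
have E := divn_eq (v - d) d. have hr : (v - d) %% d < d by rewrite ltn_pmod; lia.
have E2 : v = ((v - d) %/ d).+1 * d + (v - d) %% d by rewrite mulSn -addnA -E; lia.
have [-> ->] := divmodE hr E2. by rewrite !addnA add1n.
Qed.

Lemma grdS_small v : v < a -> grd S v = v.
Proof.
move=> hv; rewrite /S grdS //.
rewrite (@divn_small v d) ?(@modn_small v d) ?(@divn_small v b) ?(@modn_small v b)
  ?(@divn_small v a) ?(@modn_small v a) //; lia.
Qed.

Lemma grdC_lt v : v < 2*d - a -> grd C v = grd S v.
Proof.
move=> hv; rewrite /C grdC //.
by rewrite (@divn_small v (2*d-a)) ?(@modn_small v (2*d-a)).
Qed.

Lemma grdC_1 v : 2*d - a <= v < 2*(2*d - a) -> grd C v = 1 + grd S (v - (2*d - a)).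
Proof.
move=> hv; rewrite /C grdC //.
have h3 : v - (2*d-a) < 2*d - a by lia.
have h4 : v = 1 * (2*d-a) + (v - (2*d-a)) by lia.
by have [-> ->] := divmodE h3 h4.
Qed.

Lemma notcexS v x1 x2 x3 x4 : ~ counterexample S v -> v = x1 + a*x2 + b*x3 + d*x4 ->
  grd S v <= x1+x2+x3+x4.
Proof.
move=> hn hv; case: (posnP v) => hv0.
  rewrite hv0 /S grdS //. rewrite !(div0n, mod0n); lia.
rewrite leqNgt; apply/negP => hlt; apply: hn; split => //.
exists [:: x1;x2;x3;x4]; split; first by rewrite hv; exact: (rep4 a b d x1 x2 x3 x4).
rewrite /=; lia.
Qed.

Lemma canC v x1 x2 x3 x4 x5 : canonical C -> v = x1 + a*x2 + b*x3 + d*x4 + (2*d-a)*x5 ->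
  grd C v <= x1+x2+x3+x4+x5.
Proof.
move=> hn hv; case: (posnP v) => hv0.
  rewrite hv0 /C grdC // div0n mod0n grdS //. rewrite !(div0n, mod0n); lia.
rewrite leqNgt; apply/negP => hlt; apply: (hn v); split => //.
exists [:: x1;x2;x3;x4;x5]; split; first by rewrite hv; exact: (rep5 a b d (2*d-a) x1 x2 x3 x4 x5).
rewrite /=; lia.
Qed.

Lemma KZ w c : 0 < c ->
  (forall x1 x2 x3 x4, exists z1 z2 z3 z4,
     x1 + a*x2 + b*x3 + d*x4 + c = z1 + a*z2 + b*z3 + d*z4 /\ z1+z2+z3+z4 = x1+x2+x3+x4+1) ->
  d + c <= w -> ~ counterexample S (w - d) -> grd S w <= 1 + grd S (w - c).
Proof.
move=> hc hcoin hw hn.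
rewrite (grdS_sub w); last lia.
rewrite (grdS_sub (w - c)); last lia.
have [x1 [x2 [x3 [x4 [hx hs]]]]] := grdS_rep (w - c - d).
have [z1 [z2 [z3 [z4 [hz hzs]]]]] := hcoin x1 x2 x3 x4.
have hwd : w - d = z1 + a*z2 + b*z3 + d*z4 by lia.
have h := notcexS (w - d) z1 z2 z3 z4 hn hwd.
lia.
Qed.

Lemma grdS_a : grd S a = 1.
Proof.
rewrite /S grdS // (@divn_small a d) ?(@modn_small a d) ?(@divn_small a b) ?(@modn_small a b) //.
  rewrite divnn modnn pa; lia. all: lia.
Qed.

Lemma coin1 : forall x1 x2 x3 x4, exists z1 z2 z3 z4,
     x1 + a*x2 + b*x3 + d*x4 + 1 = z1 + a*z2 + b*z3 + d*z4 /\ z1+z2+z3+z4 = x1+x2+x3+x4+1.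
Proof. move=> x1 x2 x3 x4; exists x1.+1, x2, x3, x4; split; lia. Qed.
Lemma coina : forall x1 x2 x3 x4, exists z1 z2 z3 z4,
     x1 + a*x2 + b*x3 + d*x4 + a = z1 + a*z2 + b*z3 + d*z4 /\ z1+z2+z3+z4 = x1+x2+x3+x4+1.
Proof. move=> x1 x2 x3 x4; exists x1, x2.+1, x3, x4; split; lia. Qed.
Lemma coinb : forall x1 x2 x3 x4, exists z1 z2 z3 z4,
     x1 + a*x2 + b*x3 + d*x4 + b = z1 + a*z2 + b*z3 + d*z4 /\ z1+z2+z3+z4 = x1+x2+x3+x4+1.
Proof. move=> x1 x2 x3 x4; exists x1, x2, x3.+1, x4; split; lia. Qed.

Lemma forward : canonical C -> ~ canonical S -> a = 2 /\ d = b + 1 /\ 3 < b.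
Proof.
move=> HC HS.
have [w0 cw0] : exists w, counterexample S w.
  apply: NNPP => H; apply: HS => w cw; apply: H; by exists w.
have [w [[wpos [y [ry ylt]]] wmin]] := @minP _ _ cw0.
case: (@rep4P _ _ _ _ _ ry) => y1 [y2 [y3 [y4 [hy hw]]]]; subst y; clear ry; move: ylt => /= ylt.
have we : 2*d - a <= w.
  rewrite leqNgt; apply/negP => hlt.
  have hw' : w = y1 + a*y2 + b*y3 + d*y4 + (2*d-a)*0 by lia.
  have := canC w y1 y2 y3 y4 0 HC hw'.
  rewrite grdC_lt //. lia.
have ltc : forall c u1 u2 u3 u4, 0 < c -> c <= w ->
  (forall x1 x2 x3 x4, exists z1 z2 z3 z4,
     x1 + a*x2 + b*x3 + d*x4 + c = z1 + a*z2 + b*z3 + d*z4 /\ z1+z2+z3+z4 = x1+x2+x3+x4+1) ->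
  w - c = u1 + a*u2 + b*u3 + d*u4 -> u1+u2+u3+u4 + 1 = y1 + (y2 + (y3 + (y4 + 0))) ->
  w < d + c.
  move=> c u1 u2 u3 u4 hc hcw hcoin hu hus.
  rewrite ltnNge; apply/negP => hwc.
  have := KZ w c hc hcoin hwc (wmin (w - d) (_ : w - d < w)).
  have := notcexS (w - c) u1 u2 u3 u4 (wmin (w - c) (_ : w - c < w)) hu.
  move=> h1 h2; have {h1} h1 := h1 _; have {h2} h2 := h2 _; try lia.
case: y4 hw ylt ltc => [|y4] hw ylt ltc.
2:{ have h1 := grdS_sub w (_ : d <= w).
    have h2 := notcexS (w - d) y1 y2 y3 y4 (wmin (w-d) (_ : w - d < w)) (_ : w - d = _).
    move: h1 h2 => /(_ _) h1 /(_ _ _) h2.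
    have {h1} h1 := h1 _; have {h2} h2 := h2 _ _; try lia. }
case: y1 hw ylt ltc => [|y1] hw ylt ltc.
2:{ have := ltc 1 y1 y2 y3 0 (_ : 0 < 1) (_ : 1 <= w) coin1 (_ : w - 1 = _) (_ : _ = _).
    move=> /(_ _ _ _ _) h. have {h} h := h _ _ _ _; lia. }
case: y2 hw ylt ltc => [|y2] hw ylt ltc.
2:{ have := ltc a 0 y2 y3 0 pa (_ : a <= w) coina (_ : w - a = _) (_ : _ = _).
    move=> /(_ _ _ _) h. have {h} h := h _ _ _; try lia.
    have hDA : grd C (d + a) <= 2.
      have e1 : d + a = 0 + a*1 + b*0 + d*1 + (2*d-a)*0 by lia.
      have := canC (d + a) 0 1 0 1 0 HC e1; lia.
    have e2 : grd C (d+a) = 1 + grd S (d + a - (2*d-a)) by apply: grdC_1; lia.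
    have e3 : grd S (d + a - (2*d-a)) = d + a - (2*d-a) by apply: grdS_small; lia.
    have hBD : grd C (b + d) <= 2.
      have e1 : b + d = 0 + a*0 + b*1 + d*1 + (2*d-a)*0 by lia.
      have := canC (b + d) 0 0 1 1 0 HC e1; lia.
    have e4 : grd C (b+d) = 1 + grd S (b + d - (2*d-a)) by apply: grdC_1; lia.
    have e5 : grd S (b + d - (2*d-a)) = b + d - (2*d-a) by apply: grdS_small; lia.
    lia. }
case: y3 hw ylt ltc => [|y3] hw ylt ltc; first by lia.
have := ltc b 0 0 y3 0 pb (_ : b <= w) coinb (_ : w - b = _) (_ : _ = _).
move=> /(_ _ _ _) h. have {h} h := h _ _ _; try lia.
case: (leqP d (a + b)) => hdab; last by lia.
have hBD : grd C (b + d) <= 2.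
  have e1 : b + d = 0 + a*0 + b*1 + d*1 + (2*d-a)*0 by lia.
  have := canC (b + d) 0 0 1 1 0 HC e1; lia.
have e4 : grd C (b+d) = 1 + grd S (b + d - (2*d-a)) by apply: grdC_1; lia.
have e5 : grd S (b + d - (2*d-a)) = b + d - (2*d-a) by apply: grdS_small; lia.
clear ltc; case: y3 hw ylt h => [|[|y3]] hw ylt h; try lia.
have a2 : a = 2 by lia.
have db : d = b + 1 by lia.
split => //; split => //.
case: (ltnP 3 b) => // hb3.
have b3 : b = 3 by lia.
have e6 := grdS_sub w (_ : d <= w).
have e7 : w - d = a by lia.
move: e6; rewrite e7 grdS_a => /(_ _) e6; have {e6} e6 := e6 _; lia.
Qed.
End S.

Theorem corollary3 (c2 c3 c4 : nat) :
  is_system [:: 1; c2; c3; c4; 2 * c4 - c2] ->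
  (canonical [:: 1; c2; c3; c4; 2 * c4 - c2] /\ ~ canonical [:: 1; c2; c3; c4]
   <-> [:: 1; c2; c3; c4; 2 * c4 - c2] = [:: 1; 2; c3; c3 + 1; 2 * c3] /\ 3 < c3).
Proof.
move=> [_ /= /and5P [h1 h2 h3 h4 _]].
split.
- move=> [HC HS]. have [a2 [db hb]] := @forward c2 c3 c4 h1 h2 h3 HC HS.
  subst c2 c4; split => //.
  by rewrite (_ : 2 * (c3 + 1) - 2 = 2 * c3) //; lia.
- move=> [Heq hb]. case: Heq => e2 e4 e5.
  rewrite e5 e2 e4; split; [exact: canonF | exact: noncanonF].
Qed.
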